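(* Let $R$ be a monad on Sets, $LM$ a left $R$-module with values in Sets, and let $(C,\widetilde C)$ be subsets of $Ob(CC(R,LM))$ and $\widetilde{Ob}(CC(R,LM))$ satisfying conditions (1.1)–(1.6) below (equivalently, corresponding to a C-subsystem of $CC(R,LM)$). Then the assignment $(Ceq,\widetilde{Ceq})\mapsto(\sim,\simeq)$ described below is a bijection from the set of pairs of subsets $(Ceq,\widetilde{Ceq})$ which together with $(C,\widetilde C)$ satisfy conditions (1.1)–(7b) below, onto the set of pairs $(\sim,\simeq)$ of equivalence relations on $C$ and $\widetilde C$ such that: (i) $(\sim,\simeq)$ satisfies the regular congruence conditions (a)–(f) below; (ii) if $\Gamma\in C$, $F\in C$ and $ft(\Gamma)\sim F$, then $\Gamma\sim\sigma(\Gamma,F)$; (iii) if $\mathcal J\in\widetilde C$, $F\in C$ and $\partial(\mathcal J)\sim F$, then $\mathcal J\simeq\widetilde\sigma(\mathcal J,F)$. The inverse sends $(\sim,\simeq)$ to $Ceq=\{(\Gamma,T,T'):(\Gamma,T),(\Gamma,T')\in C,\ (\Gamma,T)\sim(\Gamma,T')\}$ and $\widetilde{Ceq}=\{(\Gamma,T,o,o'):(\Gamma,T,o),(\Gamma,T,o')\in\widetilde C,\ (\Gamma,T,o)\simeq(\Gamma,T,o')\}$. Conditions (for all well-formed data, $n=l(\Gamma)$, $i=l(\Gamma_1)$): (1.1) $(\rhd)$; (1.2) $(\Gamma,T\rhd)\Rightarrow(\Gamma\rhd)$; (1.3) $(\Gamma\vdash r:R)\Rightarrow(\Gamma,R\rhd)$;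 (1.4) $(\Gamma,T\rhd)\wedge(\Gamma,\Delta\vdash r:R)\Rightarrow(\Gamma,T,t_{n+1}\Delta\vdash t_{n+1}r:t_{n+1}R)$; (1.5) $(\Gamma\vdash s:S)\wedge(\Gamma,S,\Delta\vdash r:R)\Rightarrow(\Gamma,s_{n+1}(\Delta[s/n+1])\vdash s_{n+1}(r[s/n+1]):s_{n+1}(R[s/n+1]))$; (1.6) $(\Gamma,T\rhd)\Rightarrow(\Gamma,T\vdash n+1:t_{n+1}T)$; (2a) $(\Gamma\vdash T=T')\Rightarrow(\Gamma,T\rhd)$; (2b) $(\Gamma,T\rhd)\Rightarrow(\Gamma\vdash T=T)$; (2c) $(\Gamma\vdash T=T')\Rightarrow(\Gamma\vdash T'=T)$; (2d) $(\Gamma\vdash T=T')\wedge(\Gamma\vdash T'=T'')\Rightarrow(\Gamma\vdash T=T'')$; (3a) $(\Gamma\vdash o=o':T)\Rightarrow(\Gamma\vdash o:T)$; (3b) $(\Gamma\vdash o:T)\Rightarrow(\Gamma\vdash o=o:T)$; (3c) $(\Gamma\vdash o=o':T)\Rightarrow(\Gamma\vdash o'=o:T)$; (3d) $(\Gamma\vdash o=o':T)\wedge(\Gamma\vdash o'=o'':T)\Rightarrow(\Gamma\vdash o=o'':T)$; (4a) $(\Gamma_1\vdash T=T')\wedge(\Gamma_1,T,\Gamma_2\vdash S=S')\Rightarrow(\Gamma_1,T',\Gamma_2\vdash S=S')$; (4b) $(\Gamma_1\vdash T=T')\wedge(\Gamma_1,T,\Gamma_2\vdash o=o':S)\Rightarrow(\Gamma_1,T',\Gamma_2\vdash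 o=o':S)$; (4c) $(\Gamma\vdash S=S')\wedge(\Gamma\vdash o=o':S)\Rightarrow(\Gamma\vdash o=o':S')$; (5a) $(\Gamma_1,T\rhd)\wedge(\Gamma_1,\Gamma_2\vdash S=S')\Rightarrow(\Gamma_1,T,t_{i+1}\Gamma_2\vdash t_{i+1}S=t_{i+1}S')$; (5b) $(\Gamma_1,T\rhd)\wedge(\Gamma_1,\Gamma_2\vdash o=o':S)\Rightarrow(\Gamma_1,T,t_{i+1}\Gamma_2\vdash t_{i+1}o=t_{i+1}o':t_{i+1}S)$; (6a) $(\Gamma_1,T,\Gamma_2\vdash S=S')\wedge(\Gamma_1\vdash r:T)\Rightarrow(\Gamma_1,s_{i+1}(\Gamma_2[r/i+1])\vdash s_{i+1}(S[r/i+1])=s_{i+1}(S'[r/i+1]))$; (6b) $(\Gamma_1,T,\Gamma_2\vdash o=o':S)\wedge(\Gamma_1\vdash r:T)\Rightarrow(\Gamma_1,s_{i+1}(\Gamma_2[r/i+1])\vdash s_{i+1}(o[r/i+1])=s_{i+1}(o'[r/i+1]):s_{i+1}(S[r/i+1]))$; (7a) $(\Gamma_1,T,\Gamma_2,S\rhd)\wedge(\Gamma_1\vdash r=r':T)\Rightarrow(\Gamma_1,s_{i+1}(\Gamma_2[r/i+1])\vdash s_{i+1}(S[r/i+1])=s_{i+1}(S[r'/i+1]))$; (7b) $(\Gamma_1,T,\Gamma_2\vdash o:S)\wedge(\Gamma_1\vdash r=r':T)\Rightarrow(\Gamma_1,s_{i+1}(\Gamma_2[r/i+1])\vdash s_{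i+1}(o[r/i+1])=s_{i+1}(o[r'/i+1]):s_{i+1}(S[r/i+1]))$.
   Context: $[n]=\{1,\dots,n\}$. $R$ is a monad on Sets (unit $\eta$, Kleisli extension $\mathrm{bind}$), $LM$ a left $R$-module with action $\rho(f):LM(X)\to LM(Y)$ for $f:X\to R(Y)$. Elements of $Y$ are regarded in $R(Y)$ via $\eta_Y$; $E(f_1/1,\dots,f_m/m)$ is $\rho(f)(E)$ or $\mathrm{bind}(f)(E)$ with $f(i)=f_i$. For $E$ in $LM([m])$ or $R([m])$, $m\ge n$: $t_{n+1}E:=E(1/1,\dots,n/n,n+2/n+1,\dots,m+1/m)$; for $m\ge n+1$, $s\in R([n])$: $s_{n+1}(E[s/n+1]):=E(1/1,\dots,n/n,s/n+1,n+1/n+2,\dots,m-1/m)$; both applied componentwise to sequences. $Ob(CC(R,LM))$: sequences $\Gamma=(T_1,\dots,T_n)$, $T_j\in LM([j-1])$, $l(\Gamma)=n$, $ft$ drops the last entry; commas concatenate. $\widetilde{Ob}(CC(R,LM))$: elements $(\Gamma\vdash t:T)=(T_1,\dots,T_n,T,t)$ with $T\in LM([n])$, $t\in R([n])$; $\partial(\Gamma\vdash t:T)=(\Gamma,T)$. $Ceq\subset\coprod_n(\prod_{j<n}LM([j]))\times LM([n])^2$, $\widetilde{Ceq}\subset\coprod_n(\prod_{j\le n}LM([j]))\times R([n])^2$. Notation: $(\Gamma\rhd)$: $\Gamma\in C$; $(\Gamma\vdash t:T)$ as a judgement: $(\Gamma,T,t)\in\widetilde C$; $(\Gamma\vdash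 S=S')$: $(\Gamma,S,S')\in Ceq$; $(\Gamma\vdash o=o':S)$: $(\Gamma,S,o,o')\in\widetilde{Ceq}$. The assignment $(Ceq,\widetilde{Ceq})\mapsto(\sim,\simeq)$: $(T_1,\dots,T_n)\sim(T'_1,\dots,T'_n)$ (elements of $C$) iff $n=0$ or ($ft$'s are $\sim$-related and $(T_1,\dots,T_{n-1}\vdash T_n=T'_n)$); different lengths never related; $(\Gamma\vdash o:S)\simeq(\Gamma'\vdash o':S')$ iff $(\Gamma,S)\sim(\Gamma',S')$ and $(\Gamma\vdash o=o':S)$. $\sigma((T_1,\dots,T_{n+k}),(T'_1,\dots,T'_n))=(T'_1,\dots,T'_n,T_{n+1},\dots,T_{n+k})$ for $k>0$. For $\mathcal J=(T_1,\dots,T_{n+k-1}\vdash t:T_{n+k})$, $\Gamma'=(T'_1,\dots,T'_n)$, $n\ge1,k\ge0$: $\widetilde\sigma(\mathcal J,\Gamma')=(T'_1,\dots,T'_n,T_{n+1},\dots,T_{n+k-1}\vdash t:T_{n+k})$ if $k>0$, $(T'_1,\dots,T'_{n-1}\vdash t:T'_n)$ if $k=0$. Operations (with $n=l(\Gamma)$): $T((\Gamma,T),(\Gamma,\Delta))=(\Gamma,T,t_{n+1}\Delta)$; $\widetilde T((\Gamma,T),(\Gamma,\Delta\vdash r:R))=(\Gamma,T,t_{n+1}\Delta\vdash t_{n+1}r:t_{n+1}R)$; $S((\Gamma\vdash s:S),(\Gamma,S,\Delta))=(\Gamma,s_{n+1}(\Delta[s/n+1]))$; $\widetilde S((\Gamma\vdash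 s:S),(\Gamma,S,\Delta\vdash r:R))=(\Gamma,s_{n+1}(\Delta[s/n+1])\vdash s_{n+1}(r[s/n+1]):s_{n+1}(R[s/n+1]))$; $\delta(\Gamma,T)=(\Gamma,T\vdash n+1:t_{n+1}T)$. Regular congruence conditions on $(\sim,\simeq)$: (a) both are equivalence relations; (b) $\Gamma\sim\Gamma'\Rightarrow l(\Gamma)=l(\Gamma')$ and $ft(\Gamma)\sim ft(\Gamma')$; (c) $\mathcal J\simeq\mathcal J'\Rightarrow\partial\mathcal J\sim\partial\mathcal J'$; (d) if $(\Gamma,T)\in C$, $\Gamma'\in C$, $\Gamma\sim\Gamma'$, there is $(\Gamma',T')\in C$ with $(\Gamma,T)\sim(\Gamma',T')$; (e) if $\mathcal J\in\widetilde C$, $F\in C$, $\partial\mathcal J\sim F$, there is $\mathcal J'\in\widetilde C$ with $\partial\mathcal J'=F$ and $\mathcal J\simeq\mathcal J'$; (f) compatibility with $T,\widetilde T,S,\widetilde S,\delta$: related arguments in $C/\widetilde C$ for which both applications are defined give related results. *)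

(* Defs.v *)
(* [n] = {1,...,n} is represented by 'I_n
   (0-based: the ordinal i stands for the element i+1 of [n]). *)
From mathcomp Require Import all_boot.

Set Implicit Arguments.
Unset Strict Implicit.
Unset Printing Implicit Defensive.

Record Monad := {
  mR : Type -> Type;
  meta : forall X, X -> mR X;
  mbind : forall X Y, (X -> mR Y) -> mR X -> mR Y;
  mbind_eta : forall X (r : mR X), mbind (@meta X) r = r;
  meta_bind : forall X Y (f : X -> mR Y) (x : X), mbind f (meta x) = f x;
  mbind_bind : forall X Y Z (f : X -> mR Y) (g : Y -> mR Z) (r : mR X),
      mbind g (mbind f r) = mbind (fun x => mbind g (f x)) r
}.
Arguments meta {m X}.
Arguments mbind {m X Y}.

Record LModule (M : Monad) := {
  LM : Type -> Type;
  lrho : forall X Y, (X -> mR M Y) -> LM X -> LM Y;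
  lrho_eta : forall X (E : LM X), lrho (@meta M X) E = E;
  lrho_comp : forall X Y Z (f : X -> mR M Y) (g : Y -> mR M Z) (E : LM X),
      lrho g (lrho f E) = lrho (fun x => mbind g (f x)) E
}.
Arguments LM {M}.
Arguments lrho {M l X Y}.

Section CC.
Variables (M : Monad) (L : LModule M).

(*  ctx = finite sequences of ety; it is an element of Ob(CC(R,LM))     *)
(*        iff its k-th entry (0-based) lies in LM([k])  (wf_ctx).       *)
(*  jdg = (Gamma, T, t), an element of Ob~ iff wf_jdg.                  *)

Definition ety := {j : nat & LM L 'I_j}.
Definition tm := {j : nat & mR M 'I_j}.
Definition ctx := seq ety.
Definition jdg := (ctx * ety * tm)%type.

Definition jctx (J : jdg) : ctx := J.1.1.
Definition jty (J : jdg) : ety := J.1.2.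
Definition jtm (J : jdg) : tm := J.2.

Fixpoint wf_from (k : nat) (G : ctx) : Prop :=
  match G with
  | [::] => True
  | e :: G' => tag e = k /\ wf_from k.+1 G'
  end.

Definition wf_ctx (G : ctx) : Prop := wf_from 0 G.

Definition wf_ext (G : ctx) (T : ety) : Prop := wf_ctx G /\ tag T = size G.

Definition wf_jdg (J : jdg) : Prop :=
  wf_ext (jctx J) (jty J) /\ tag (jtm J) = size (jctx J).

Definition ft (G : ctx) : ctx := take (size G).-1 G.
Definition bd (J : jdg) : ctx := rcons (jctx J) (jty J).

Section Ops.
Variable F : Type -> Type.
Variable act : forall X Y, (X -> mR M Y) -> F X -> F Y.

(* t_{n+1} E := E(1/1,...,n/n, n+2/n+1, ..., m+1/m)   for E in F([m]), m >= n.
   0-based: i |-> bump n i = lift n i. *)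
Definition wk_gen (n : nat) (e : {j : nat & F 'I_j}) : {j : nat & F 'I_j} :=
  let: existT m E := e in
  existT _ m.+1 (act (fun i : 'I_m => meta (lift (inord n : 'I_m.+1) i)) E).

(* the substitution map 'I_(k+1) -> R('I_k) for s in R([n]), n <= k :
   i |-> i (i < n),  n |-> s (regarded in R([k]) via [n] c [k]),
   i |-> i-1 (i > n). *)
Definition sub_fun (n k : nat) (h : n <= k) (s : mR M 'I_n)
  : 'I_k.+1 -> mR M 'I_k :=
  fun i => match unlift (inord n : 'I_k.+1) i with
           | Some j => meta j
           | None => mbind (fun j : 'I_n => meta (widen_ord h j)) s
           end.

(* s_{n+1}(E[s/n+1]) := E(1/1,...,n/n, s/n+1, n+1/n+2, ..., m-1/m)
   for E in F([m]), s in R([n]), m >= n+1 (n is the tag of s).  Outside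
   this range (never used on well-formed data) the entry is returned
   unchanged. *)
Definition sub_gen (s : tm) (e : {j : nat & F 'I_j}) : {j : nat & F 'I_j} :=
  let: existT n s0 := s in
  let: existT m E := e in
  match m return F 'I_m -> {j : nat & F 'I_j} with
  | 0 => fun E => existT _ 0 E
  | k.+1 => fun E =>
      match n <= k as b return (n <= k) = b -> {j : nat & F 'I_j} with
      | true => fun h => existT _ k (act (sub_fun h s0) E)
      | false => fun _ => existT _ k.+1 E
      end (erefl _)
  end E.

End Ops.

Definition wkT (n : nat) (e : ety) : ety := @wk_gen (LM L) (@lrho M L) n e.
Definition wkt (n : nat) (t : tm) : tm := @wk_gen (mR M) (@mbind M) n t.
Definition subT (s : tm) (e : ety) : ety := @sub_gen (LM L) (@lrho M L) s e.
Definition subt (s : tm) (t : tm) : tm := @sub_gen (mR M) (@mbind M) s t.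

(* the variable n+1 in R([n+1]) *)
Definition var (n : nat) : tm := existT _ n.+1 (meta (ord_max : 'I_n.+1)).

Definition sigma (G F : ctx) : ctx := F ++ drop (size F) G.
Definition sigmat (J : jdg) (F : ctx) : jdg :=
  if size F <= size (jctx J)
  then (F ++ drop (size F) (jctx J), jty J, jtm J)
  else (ft F, last (jty J) F, jtm J).

Definition Csubsystem (C : ctx -> Prop) (Ct : jdg -> Prop) : Prop :=
  (forall G, C G -> wf_ctx G) /\
  (forall J, Ct J -> wf_jdg J) /\
  (* 1.1 *) C [::] /\
  (* 1.2 *) (forall G T, C (rcons G T) -> C G) /\
  (* 1.3 *) (forall G R r, Ct (G, R, r) -> C (rcons G R)) /\
  (* 1.4 *) (forall G T D R r, C (rcons G T) -> Ct (G ++ D, R, r) ->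
       Ct (rcons G T ++ map (wkT (size G)) D, wkT (size G) R, wkt (size G) r)) /\
  (* 1.5 *) (forall G S s D R r, Ct (G, S, s) -> Ct (rcons G S ++ D, R, r) ->
       Ct (G ++ map (subT s) D, subT s R, subt s r)) /\
  (* 1.6 *) (forall G T, C (rcons G T) ->
       Ct (rcons G T, wkT (size G) T, var (size G))).

(* Ceq G T T'     stands for  (G |- T = T')                            *)
(* Cteq G T o o'  stands for  (G |- o = o' : T)                         *)

Definition eq_conditions (C : ctx -> Prop) (Ct : jdg -> Prop)
  (Ceq : ctx -> ety -> ety -> Prop) (Cteq : ctx -> ety -> tm -> tm -> Prop)
  : Prop :=
  (* Ceq, Ceq~ are subsets of their ambient sets *)
  (forall G T T', Ceq G T T' -> wf_ext G T /\ tag T' = size G) /\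
  (forall G T o o', Cteq G T o o' ->
       wf_ext G T /\ tag o = size G /\ tag o' = size G) /\
  (* 2a *) (forall G T T', Ceq G T T' -> C (rcons G T)) /\
  (* 2b *) (forall G T, C (rcons G T) -> Ceq G T T) /\
  (* 2c *) (forall G T T', Ceq G T T' -> Ceq G T' T) /\
  (* 2d *) (forall G T T' T'', Ceq G T T' -> Ceq G T' T'' -> Ceq G T T'') /\
  (* 3a *) (forall G T o o', Cteq G T o o' -> Ct (G, T, o)) /\
  (* 3b *) (forall G T o, Ct (G, T, o) -> Cteq G T o o) /\
  (* 3c *) (forall G T o o', Cteq G T o o' -> Cteq G T o' o) /\
  (* 3d *) (forall G T o o' o'', Cteq G T o o' -> Cteq G T o' o'' ->
              Cteq G T o o'') /\
  (* 4a *) (forall G1 T T' G2 S S', Ceq G1 T T' ->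
       Ceq (rcons G1 T ++ G2) S S' -> Ceq (rcons G1 T' ++ G2) S S') /\
  (* 4b *) (forall G1 T T' G2 S o o', Ceq G1 T T' ->
       Cteq (rcons G1 T ++ G2) S o o' -> Cteq (rcons G1 T' ++ G2) S o o') /\
  (* 4c *) (forall G S S' o o', Ceq G S S' -> Cteq G S o o' -> Cteq G S' o o') /\
  (* 5a *) (forall G1 T G2 S S', C (rcons G1 T) -> Ceq (G1 ++ G2) S S' ->
       Ceq (rcons G1 T ++ map (wkT (size G1)) G2)
           (wkT (size G1) S) (wkT (size G1) S')) /\
  (* 5b *) (forall G1 T G2 S o o', C (rcons G1 T) -> Cteq (G1 ++ G2) S o o' ->
       Cteq (rcons G1 T ++ map (wkT (size G1)) G2)
            (wkT (size G1) S) (wkt (size G1) o) (wkt (size G1) o')) /\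
  (* 6a *) (forall G1 T G2 S S' r, Ceq (rcons G1 T ++ G2) S S' -> Ct (G1, T, r) ->
       Ceq (G1 ++ map (subT r) G2) (subT r S) (subT r S')) /\
  (* 6b *) (forall G1 T G2 S o o' r, Cteq (rcons G1 T ++ G2) S o o' ->
       Ct (G1, T, r) ->
       Cteq (G1 ++ map (subT r) G2) (subT r S) (subt r o) (subt r o')) /\
  (* 7a *) (forall G1 T G2 S r r', C (rcons (rcons G1 T ++ G2) S) ->
       Cteq G1 T r r' ->
       Ceq (G1 ++ map (subT r) G2) (subT r S) (subT r' S)) /\
  (* 7b *) (forall G1 T G2 S o r r', Ct (rcons G1 T ++ G2, S, o) ->
       Cteq G1 T r r' ->
       Cteq (G1 ++ map (subT r) G2) (subT r S) (subt r o) (subt r' o)).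

(* on reversed sequences: (T_1..T_n) ~ (T'_1..T'_n) iff n = 0 or
   (ft ~ ft and (T_1..T_{n-1} |- T_n = T'_n)); different lengths never. *)
Fixpoint sim_rev (Ceq : ctx -> ety -> ety -> Prop) (rG rG' : seq ety) : Prop :=
  match rG, rG' with
  | [::], [::] => True
  | T :: rG1, T' :: rG1' => sim_rev Ceq rG1 rG1' /\ Ceq (rev rG1) T T'
  | _, _ => False
  end.

Definition phi_sim (C : ctx -> Prop) (Ceq : ctx -> ety -> ety -> Prop)
  (G G' : ctx) : Prop :=
  C G /\ C G' /\ sim_rev Ceq (rev G) (rev G').

Definition phi_simeq (C : ctx -> Prop) (Ct : jdg -> Prop)
  (Ceq : ctx -> ety -> ety -> Prop) (Cteq : ctx -> ety -> tm -> tm -> Prop)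
  (J J' : jdg) : Prop :=
  Ct J /\ Ct J' /\ phi_sim C Ceq (bd J) (bd J') /\
  Cteq (jctx J) (jty J) (jtm J) (jtm J').

Definition psi_Ceq (C : ctx -> Prop) (sim : ctx -> ctx -> Prop)
  (G : ctx) (T T' : ety) : Prop :=
  C (rcons G T) /\ C (rcons G T') /\ sim (rcons G T) (rcons G T').

Definition psi_Cteq (Ct : jdg -> Prop) (simeq : jdg -> jdg -> Prop)
  (G : ctx) (T : ety) (o o' : tm) : Prop :=
  Ct (G, T, o) /\ Ct (G, T, o') /\ simeq (G, T, o) (G, T, o').

Definition equiv_on {A : Type} (P : A -> Prop) (r : A -> A -> Prop) : Prop :=
  (forall x y, r x y -> P x /\ P y) /\
  (forall x, P x -> r x x) /\
  (forall x y, r x y -> r y x) /\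
  (forall x y z, r x y -> r y z -> r x z).

Definition regular_congruence (C : ctx -> Prop) (Ct : jdg -> Prop)
  (sim : ctx -> ctx -> Prop) (simeq : jdg -> jdg -> Prop) : Prop :=
  (* a *) (equiv_on C sim /\ equiv_on Ct simeq) /\
  (* b *) (forall G G', sim G G' -> size G = size G' /\ sim (ft G) (ft G')) /\
  (* c *) (forall J J', simeq J J' -> sim (bd J) (bd J')) /\
  (* d *) (forall G T G', C (rcons G T) -> C G' -> sim G G' ->
             exists T', C (rcons G' T') /\ sim (rcons G T) (rcons G' T')) /\
  (* e *) (forall J F, Ct J -> C F -> sim (bd J) F ->
             exists J', Ct J' /\ bd J' = F /\ simeq J J') /\
  (* f: T *) (forall G T D G' T' D',
       sim (rcons G T) (rcons G' T') -> sim (G ++ D) (G' ++ D') ->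
       sim (rcons G T ++ map (wkT (size G)) D)
           (rcons G' T' ++ map (wkT (size G')) D')) /\
  (* f: T~ *) (forall G T D R r G' T' D' R' r',
       sim (rcons G T) (rcons G' T') -> simeq (G ++ D, R, r) (G' ++ D', R', r') ->
       simeq (rcons G T ++ map (wkT (size G)) D, wkT (size G) R, wkt (size G) r)
             (rcons G' T' ++ map (wkT (size G')) D', wkT (size G') R',
              wkt (size G') r')) /\
  (* f: S *) (forall G S s D G' S' s' D',
       simeq (G, S, s) (G', S', s') -> sim (rcons G S ++ D) (rcons G' S' ++ D') ->
       sim (G ++ map (subT s) D) (G' ++ map (subT s') D')) /\
  (* f: S~ *) (forall G S s D R r G' S' s' D' R' r',
       simeq (G, S, s) (G', S', s') ->
       simeq (rcons G S ++ D, R, r) (rcons G' S' ++ D', R', r') ->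
       simeq (G ++ map (subT s) D, subT s R, subt s r)
             (G' ++ map (subT s') D', subT s' R', subt s' r')) /\
  (* f: delta *) (forall G T G' T', sim (rcons G T) (rcons G' T') ->
       simeq (rcons G T, wkT (size G) T, var (size G))
             (rcons G' T', wkT (size G') T', var (size G'))).

Definition target_conditions (C : ctx -> Prop) (Ct : jdg -> Prop)
  (sim : ctx -> ctx -> Prop) (simeq : jdg -> jdg -> Prop) : Prop :=
  equiv_on C sim /\ equiv_on Ct simeq /\
  (* i *)   regular_congruence C Ct sim simeq /\
  (* ii *)  (forall G F, C G -> C F -> sim (ft G) F -> sim G (sigma G F)) /\
  (* iii *) (forall J F, Ct J -> C F -> sim (bd J) F -> simeq J (sigmat J F)).

End CC.

(* Main.v *)
Require Import Defs.
From mathcomp Require Import all_boot.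
From mathcomp Require Import zify.

Set Implicit Arguments.
Unset Strict Implicit.

Lemma sim_rev_size M (L : LModule M) (Q : ctx L -> ety L -> ety L -> Prop) rG rG' :
  sim_rev Q rG rG' -> size rG = size rG'.
Proof. by elim: rG rG' => [|x r IH] [|y r'] //= [/IH -> _]. Qed.

Lemma sr_rcons M (L : LModule M) (Q : ctx L -> ety L -> ety L -> Prop) G G' T T' :
  sim_rev Q (rev (rcons G T)) (rev (rcons G' T')) <->
  sim_rev Q (rev G) (rev G') /\ Q G T T'.
Proof. by rewrite !rev_rcons /= revK. Qed.

Lemma sr_size M (L : LModule M) (Q : ctx L -> ety L -> ety L -> Prop) G G' :
  sim_rev Q (rev G) (rev G') -> size G = size G'.
Proof. by move/sim_rev_size; rewrite !size_rev. Qed.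

Lemma sr_cat_size M (L : LModule M) (Q : ctx L -> ety L -> ety L -> Prop) G G' D D' :
  sim_rev Q (rev (G ++ D)) (rev (G' ++ D')) -> size G = size G' ->
  size D = size D'.
Proof. move/sr_size; rewrite !size_cat; lia. Qed.

Lemma sr_rconsl M (L : LModule M) (Q : ctx L -> ety L -> ety L -> Prop) G0 T G' :
  sim_rev Q (rev (rcons G0 T)) (rev G') ->
  exists G0' T', G' = rcons G0' T' /\ sim_rev Q (rev G0) (rev G0') /\ Q G0 T T'.
Proof.
case/lastP: G' => [|G0' T']; first by rewrite rev_rcons.
by move/sr_rcons=> [h1 h2]; exists G0', T'.
Qed.

Lemma sr_nill M (L : LModule M) (Q : ctx L -> ety L -> ety L -> Prop) G' :
  sim_rev Q (rev [::]) (rev G') -> G' = [::].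
Proof. by case/lastP: G' => // G T; rewrite rev_rcons. Qed.

Lemma ft_rcons (X : Type) (G : seq X) T : take (size (rcons G T)).-1 (rcons G T) = G.
Proof. by rewrite size_rcons /= -cats1 take_size_cat. Qed.

Lemma wf_from_rcons M (L : LModule M) k (G : ctx L) T :
  wf_from k (rcons G T) -> wf_from k G /\ tag T = k + size G.
Proof.
elim: G k => [|x G IH] k /=; first by move=> [-> _]; rewrite addn0.
by move=> [hx /IH [h1 h2]]; split=> //; rewrite h2 addSnnS.
Qed.

Section PartA.
Variables (M : Monad) (L : LModule M) (C : ctx L -> Prop) (Ct : jdg L -> Prop)
  (Ceq : ctx L -> ety L -> ety L -> Prop) (Cteq : ctx L -> ety L -> tm M -> tm M -> Prop).

Hypothesis C11 : C [::].
Hypothesis C12 : forall G T, C (rcons G T) -> C G.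
Hypothesis C13 : forall G R r, Ct (G, R, r) -> C (rcons G R).
Hypothesis C14 : forall G T D R r, C (rcons G T) -> Ct (G ++ D, R, r) ->
       Ct (rcons G T ++ map (wkT (size G)) D, wkT (size G) R, wkt (size G) r).
Hypothesis C15 : forall G S s D R r, Ct (G, S, s) -> Ct (rcons G S ++ D, R, r) ->
       Ct (G ++ map (subT s) D, subT s R, subt s r).
Hypothesis C16 : forall G T, C (rcons G T) ->
       Ct (rcons G T, wkT (size G) T, var M (size G)).

Hypothesis E2a : forall G T T', Ceq G T T' -> C (rcons G T).
Hypothesis E2b : forall G T, C (rcons G T) -> Ceq G T T.
Hypothesis E2c : forall G T T', Ceq G T T' -> Ceq G T' T.
Hypothesis E2d : forall G T T' T'', Ceq G T T' -> Ceq G T' T'' -> Ceq G T T''.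
Hypothesis E3a : forall G T o o', Cteq G T o o' -> Ct (G, T, o).
Hypothesis E3b : forall G T o, Ct (G, T, o) -> Cteq G T o o.
Hypothesis E3c : forall G T o o', Cteq G T o o' -> Cteq G T o' o.
Hypothesis E3d : forall G T o o' o'', Cteq G T o o' -> Cteq G T o' o'' ->
              Cteq G T o o''.
Hypothesis E4a : forall G1 T T' G2 S S', Ceq G1 T T' ->
       Ceq (rcons G1 T ++ G2) S S' -> Ceq (rcons G1 T' ++ G2) S S'.
Hypothesis E4b : forall G1 T T' G2 S o o', Ceq G1 T T' ->
       Cteq (rcons G1 T ++ G2) S o o' -> Cteq (rcons G1 T' ++ G2) S o o'.
Hypothesis E4c : forall G S S' o o', Ceq G S S' -> Cteq G S o o' -> Cteq G S' o o'.
Hypothesis E5a : forall G1 T G2 S S', C (rcons G1 T) -> Ceq (G1 ++ G2) S S' ->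
       Ceq (rcons G1 T ++ map (wkT (size G1)) G2)
           (wkT (size G1) S) (wkT (size G1) S').
Hypothesis E5b : forall G1 T G2 S o o', C (rcons G1 T) -> Cteq (G1 ++ G2) S o o' ->
       Cteq (rcons G1 T ++ map (wkT (size G1)) G2)
            (wkT (size G1) S) (wkt (size G1) o) (wkt (size G1) o').
Hypothesis E6a : forall G1 T G2 S S' r, Ceq (rcons G1 T ++ G2) S S' -> Ct (G1, T, r) ->
       Ceq (G1 ++ map (subT r) G2) (subT r S) (subT r S').
Hypothesis E6b : forall G1 T G2 S o o' r, Cteq (rcons G1 T ++ G2) S o o' ->
       Ct (G1, T, r) ->
       Cteq (G1 ++ map (subT r) G2) (subT r S) (subt r o) (subt r o').
Hypothesis E7a : forall G1 T G2 S r r', C (rcons (rcons G1 T ++ G2) S) ->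
       Cteq G1 T r r' ->
       Ceq (G1 ++ map (subT r) G2) (subT r S) (subT r' S).
Hypothesis E7b : forall G1 T G2 S o r r', Ct (rcons G1 T ++ G2, S, o) ->
       Cteq G1 T r r' ->
       Cteq (G1 ++ map (subT r) G2) (subT r S) (subt r o) (subt r' o).

Notation sr G G' := (sim_rev Ceq (rev G) (rev G')).
Let nill := @sr_nill M L Ceq.
Let rconsl := @sr_rconsl M L Ceq.
Let rc := @sr_rcons M L Ceq.

Lemma conv G G' D S S' : sr G G' -> Ceq (G ++ D) S S' -> Ceq (G' ++ D) S S'.
Proof.
elim/last_ind: G G' D => [|G0 T IH] G' D.
  by move/nill => ->.
move=> /rconsl [G0' [T' [-> [h1 h2]]]].
rewrite !cat_rcons => H; apply: IH h1 _.
by rewrite -cat_rcons; apply: E4a h2 _; rewrite cat_rcons.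
Qed.

Lemma convt G G' D S o o' : sr G G' -> Cteq (G ++ D) S o o' -> Cteq (G' ++ D) S o o'.
Proof.
elim/last_ind: G G' D => [|G0 T IH] G' D.
  by move/nill => ->.
move=> /rconsl [G0' [T' [-> [h1 h2]]]].
rewrite !cat_rcons => H; apply: IH h1 _.
by rewrite -cat_rcons; apply: E4b h2 _; rewrite cat_rcons.
Qed.

Lemma conv0 G G' S S' : sr G G' -> Ceq G S S' -> Ceq G' S S'.
Proof. by move=> h; have := @conv G G' [::] S S' h; rewrite !cats0. Qed.

Lemma convt0 G G' S o o' : sr G G' -> Cteq G S o o' -> Cteq G' S o o'.
Proof. by move=> h; have := @convt G G' [::] S o o' h; rewrite !cats0. Qed.

Lemma sr_refl G : C G -> sr G G.
Proof.
elim/last_ind: G => [|G T IH] // hC.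
by apply/rc; split; [apply: IH; apply: C12 hC | apply: E2b].
Qed.

Lemma sr_sym G G' : sr G G' -> sr G' G.
Proof.
elim/last_ind: G G' => [|G0 T IH] G'; first by move/nill => ->.
move=> /rconsl [G0' [T' [-> [h1 h2]]]].
apply/rc; split; first exact: IH.
by apply: conv0 h1 _; apply: E2c.
Qed.

Lemma sr_trans G G' G'' : sr G G' -> sr G' G'' -> sr G G''.
Proof.
elim/last_ind: G G' G'' => [|G0 T IH] G' G''.
  by move/nill => -> /nill ->.
move=> /rconsl [G0' [T' [-> [h1 h2]]]].
move=> /rconsl [G0'' [T'' [-> [h3 h4]]]].
apply/rc; split; first exact: IH h3.
by apply: E2d h2 _; apply: conv0 h4; apply: sr_sym.
Qed.

Lemma wkD G T G' T' D D' : C (rcons G T) -> sr (rcons G T) (rcons G' T') ->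
  sr (G ++ D) (G' ++ D') ->
  sr (rcons G T ++ map (wkT (size G)) D) (rcons G' T' ++ map (wkT (size G')) D').
Proof.
move=> hC h; have eqs : size G = size G'.
  by move: h => /sr_size; rewrite !size_rcons => -[].
rewrite -eqs.
elim/last_ind: D D' => [|D0 X IH] D'.
  case/lastP: D' => [|D0' X']; first by rewrite !cats0.
  by move=> /sr_cat_size /(_ eqs) /eqP; rewrite size_rcons.
case/lastP: D' => [|D0' X'].
  by move=> /sr_cat_size /(_ eqs) /eqP; rewrite size_rcons.
rewrite -!rcons_cat => /rc [h1 h2].
rewrite !map_rcons -!rcons_cat; apply/rc; split; first exact: IH.
exact: E5a hC h2.
Qed.

Lemma Cwk G T D : C (rcons G T) -> C (G ++ D) -> C (rcons G T ++ map (wkT (size G)) D).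
Proof.
case/lastP: D => [|D0 X] hT; first by rewrite !cats0.
rewrite -rcons_cat map_rcons -rcons_cat => hc; apply: E2a; apply: E5a hT _.
exact: E2b hc.
Qed.

Lemma Csb G S s D : Ct (G, S, s) -> C (rcons G S ++ D) -> C (G ++ map (subT s) D).
Proof.
case/lastP: D => [|D0 X] hs; first by rewrite /= !cats0 => /C12.
rewrite -rcons_cat map_rcons -rcons_cat => hc; apply: E2a; apply: E6a _ hs.
exact: E2b hc.
Qed.

Lemma sbD G S s G' S' s' D D' : Cteq G S s s' -> sr G G' -> size G = size G' ->
  sr (rcons G S ++ D) (rcons G' S' ++ D') ->
  sr (G ++ map (subT s) D) (G' ++ map (subT s') D').
Proof.
move=> hs hG eqs.
have eqs' : size (rcons G S) = size (rcons G' S') by rewrite !size_rcons eqs.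
elim/last_ind: D D' => [|D0 X IH] D'.
  case/lastP: D' => [|D0' X']; first by rewrite !cats0.
  by move=> /sr_cat_size /(_ eqs') /eqP; rewrite size_rcons.
case/lastP: D' => [|D0' X'].
  by move=> /sr_cat_size /(_ eqs') /eqP; rewrite size_rcons.
rewrite -!rcons_cat => /rc [h1 h2].
rewrite !map_rcons -!rcons_cat; apply/rc; split; first exact: IH.
apply: E2d (E6a h2 (E3a hs)) _.
exact: E7a (E2a (E2c h2)) hs.
Qed.

Lemma trT G T G' T' a b : sr (rcons G T) (rcons G' T') -> Cteq G T a b -> Cteq G' T' a b.
Proof. by move/rc => [h1 h2] h; apply: E4c (conv0 h1 h2) (convt0 h1 h). Qed.

Lemma eqv_sim : equiv_on C (phi_sim C Ceq).
Proof.
rewrite /equiv_on /phi_sim; split; first by move=> x y [? []].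
split; first by move=> x hx; split; [|split]; [| |exact: sr_refl].
split; first by move=> x y [hx [hy h]]; split=>//; split=>//; exact: sr_sym.
move=> x y z [hx [hy h]] [_ [hz h']]; split=>//; split=>//; exact: sr_trans h h'.
Qed.

Lemma eqv_simeq : equiv_on Ct (phi_simeq C Ct Ceq Cteq).
Proof.
rewrite /equiv_on /phi_simeq; split; first by move=> x y [? []].
split.
  move=> [[G T] o] hJ; split=> //; split=> //; split; last exact: E3b.
  by split; [exact: C13 hJ | split; [exact: C13 hJ| exact: sr_refl (C13 hJ)]].
split.
  move=> [[G T] o] [[G' T'] o'] [h1 [h2 [[c1 [c2 h3]] h4]]].
  split=> //; split=> //; split; first by split=> //; split=> //; exact: sr_sym.
  exact: trT h3 (E3c h4).
move=> [[G T] o] [[G' T'] o'] [[G'' T''] o''].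
move=> [h1 [h2 [[c1 [c2 h3]] h4]]] [_ [h5 [[_ [c3 h6]] h7]]].
split=> //; split=> //; split; first by split=> //; split=> //; exact: sr_trans h3 h6.
apply: E3d h4 _; exact: trT (sr_sym h3) h7.
Qed.

Lemma fT_lem G T D G' T' D' : phi_sim C Ceq (rcons G T) (rcons G' T') ->
  phi_sim C Ceq (G ++ D) (G' ++ D') ->
  phi_sim C Ceq (rcons G T ++ map (wkT (size G)) D)
           (rcons G' T' ++ map (wkT (size G')) D').
Proof.
move=> [c1 [c2 h]] [c3 [c4 h']].
by split; [exact: Cwk|split;[exact: Cwk|exact: wkD]].
Qed.

Lemma fS_lem G S s D G' S' s' D' :
  phi_simeq C Ct Ceq Cteq (G, S, s) (G', S', s') ->
  phi_sim C Ceq (rcons G S ++ D) (rcons G' S' ++ D') ->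
  phi_sim C Ceq (G ++ map (subT s) D) (G' ++ map (subT s') D').
Proof.
move=> [j1 [j2 [[_ [_ hb]] hc]]] [c1 [c2 h]]; rewrite /= in hb hc.
move/rc: (hb) => [hG _]; have eqs := sr_size hG.
by split; [exact: Csb j1 c1 | split; [exact: Csb j2 c2 | exact: sbD hc hG eqs h]].
Qed.

Lemma partA1 : target_conditions C Ct (phi_sim C Ceq) (phi_simeq C Ct Ceq Cteq).
Proof.
have e1 := eqv_sim; have e2 := eqv_simeq.
split=> //; split=> //; split.
  split=> //.
  split.
    move=> G G' [c1 [c2 h]]; split; first exact: sr_size h.
    case/lastP: G h c1 => [|G0 T].
      by move/nill => -> _; rewrite /ft /=; split=> //; split.
    move=> /rconsl [G0' [T' [e [h1 h2]]]] c1; subst G'.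
    rewrite /ft !ft_rcons; split; [exact: C12 c1|split; [exact: C12 c2| exact h1]].
  split; first by move=> J J' [_ [_ [h _]]].
  split.
    move=> G T G' hT hG' [c1 [c2 h]]; exists T; have hE := conv0 h (E2b hT).
    split; first exact: E2a hE.
    split; first exact hT.
    split; first exact: E2a hE.
    by apply/rc; split=> //; exact: E2b.
  split.
    move=> [[G T] o] F hJ hF [c1 [c2 h]]; rewrite /bd /= in c1 h.
    case/rconsl: (h) => G' [T' [eF _]]; subst F.
    have hJ' := E3a (trT h (E3b hJ)).
    exists (G', T', o); split=> //; split=> //.
    split=> //; split=> //; split; last exact: E3b.
    by split=> //; split.
  split.
    by move=> G T D G' T' D'; apply: fT_lem.
  split.
    move=> G T D R r G' T' D' R' r' hs [j1 [j2 [hb hc]]].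
    have eqs : size G = size G'.
      by case: hs => [_ [_ /sr_size]]; rewrite !size_rcons => -[].
    case: (hs) => [c1 [c2 _]].
    split; first exact: C14.
    split; first exact: C14.
    split; last by rewrite /= -eqs; exact: E5b c1 hc.
    rewrite /bd /= in hb *; rewrite rcons_cat -map_rcons rcons_cat -map_rcons.
    idtac.
    by apply: fT_lem => //; rewrite -!rcons_cat.
  split.
    by move=> G S s D G' S' s' D'; apply: fS_lem.
  split.
    move=> G S s D R r G' S' s' D' R' r' hs [j1 [j2 [hb hc]]].
    case: (hs) => [k1 [k2 [_ hsc]]]; rewrite /= in hsc hc.
    split; first (apply: C15; [exact k1| exact j1]).
    split; first (apply: C15; [exact k2| exact j2]).
    split; last first.
      rewrite /=; apply: E3d (E6b hc k1) _.
      exact: E7b (E3a (E3c hc)) hsc.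
    rewrite /bd /= in hb *; rewrite rcons_cat -map_rcons rcons_cat -map_rcons.
    rewrite !rcons_cat in hb; exact: (fS_lem (conj k1 (conj k2 (conj (proj1 (proj2 (proj2 hs))) hsc))) hb).
  move=> G T G' T' [c1 [c2 h]].
  have eqs : size G = size G' by move: h => /sr_size; rewrite !size_rcons => -[].
  split; first exact: C16.
  split; first exact: C16.
  split; last by rewrite /= -eqs; apply: E3b; exact: C16.
  rewrite /bd /=.
  split; first exact: C13 (C16 c1).
  split; first exact: C13 (C16 c2).
  apply/rc; split=> //; rewrite -eqs.
  by have := @E5a G T [::] T T' c1; rewrite /= !cats0; apply; move/rc: h => [].
split.
  move=> G F cG cF [_ [_ h]].
  case/lastP: G cG h => [|G0 T] cG.
    by rewrite /ft /= => /nill ->; rewrite /sigma /=; split=> //; split.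
  rewrite /ft ft_rcons => h; have eqs := sr_size h.
  rewrite /sigma -cats1 drop_size_cat // !cats1.
  have hE := conv0 h (E2b cG).
  split=> //; split; first exact: E2a hE.
  by apply/rc; split=> //; exact: E2b.
move=> [[G T] o] F hJ cF [c1 [c2 h]]; rewrite /bd /= in c1 h.
case/rconsl: (h) => G' [T' [eF _]]; subst F.
have eqs : size G = size G' by move: h => /sr_size; rewrite !size_rcons => -[].
rewrite /sigmat /= size_rcons -eqs ltnn /= /ft ft_rcons last_rcons.
have hJ' := E3a (trT h (E3b hJ)).
split=> //; split=> //; split; last exact: E3b.
by split=> //; split.
Qed.

Lemma partA3 :
  (forall G T T', psi_Ceq C (phi_sim C Ceq) G T T' <-> Ceq G T T') /\
  (forall G T o o',
     psi_Cteq Ct (phi_simeq C Ct Ceq Cteq) G T o o' <-> Cteq G T o o').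
Proof.
split.
  move=> G T T'; split; first by move=> [_ [_ [_ [_ /rc [_ h]]]]].
  move=> h; have c := E2a h; have c' := E2a (E2c h).
  split=> //; split=> //; split=> //; split=> //.
  by apply/rc; split=> //; exact: sr_refl (C12 c).
move=> G T o o'; split; first by move=> [_ [_ [_ [_ [_ h]]]]].
move=> h; have j1 := E3a h; have j2 := E3a (E3c h).
split=> //; split=> //; split=> //; split=> //; split=> //.
have c := C13 j1; split=> //; split=> //; exact: sr_refl.
Qed.

End PartA.

Lemma sigma_rcons M (L : LModule M) (A F : ctx L) X :
  size F = size A -> sigma (rcons A X) F = rcons F X.
Proof. by move=> e; rewrite /sigma -cats1 drop_size_cat // cats1. Qed.

Lemma sigmat_rcons M (L : LModule M) (G G' : ctx L) T T' (o : tm M) :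
  size G' = size G -> sigmat (G, T, o) (rcons G' T') = (G', T', o).
Proof. by move=> e; rewrite /sigmat /= size_rcons e ltnn /ft ft_rcons last_rcons. Qed.

Section PartB.
Variables (M : Monad) (L : LModule M) (C : ctx L -> Prop) (Ct : jdg L -> Prop)
  (sim : ctx L -> ctx L -> Prop) (simeq : jdg L -> jdg L -> Prop).
Hypothesis wfC : forall G, C G -> wf_ctx G.
Hypothesis wfCt : forall J, Ct J -> wf_jdg J.
Hypothesis C11 : C [::].
Hypothesis C12 : forall G T, C (rcons G T) -> C G.
Hypothesis C13 : forall G R r, Ct (G, R, r) -> C (rcons G R).
Hypothesis ES : equiv_on C sim.
Hypothesis ESt : equiv_on Ct simeq.
Hypothesis Hb : forall G G', sim G G' -> size G = size G' /\ sim (ft G) (ft G').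
Hypothesis Hc : forall J J', simeq J J' -> sim (bd J) (bd J').
Hypothesis HfT : forall G T D G' T' D',
       sim (rcons G T) (rcons G' T') -> sim (G ++ D) (G' ++ D') ->
       sim (rcons G T ++ map (wkT (size G)) D)
           (rcons G' T' ++ map (wkT (size G')) D').
Hypothesis HfTt : forall G T D R r G' T' D' R' r',
       sim (rcons G T) (rcons G' T') -> simeq (G ++ D, R, r) (G' ++ D', R', r') ->
       simeq (rcons G T ++ map (wkT (size G)) D, wkT (size G) R, wkt (size G) r)
             (rcons G' T' ++ map (wkT (size G')) D', wkT (size G') R',
              wkt (size G') r').
Hypothesis HfS : forall G S s D G' S' s' D',
       simeq (G, S, s) (G', S', s') -> sim (rcons G S ++ D) (rcons G' S' ++ D') ->
       sim (G ++ map (subT s) D) (G' ++ map (subT s') D').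
Hypothesis HfSt : forall G S s D R r G' S' s' D' R' r',
       simeq (G, S, s) (G', S', s') ->
       simeq (rcons G S ++ D, R, r) (rcons G' S' ++ D', R', r') ->
       simeq (G ++ map (subT s) D, subT s R, subt s r)
             (G' ++ map (subT s') D', subT s' R', subt s' r').
Hypothesis Hii : forall G F, C G -> C F -> sim (ft G) F -> sim G (sigma G F).
Hypothesis Hiii : forall J F, Ct J -> C F -> sim (bd J) F -> simeq J (sigmat J F).

Let scl : forall x y, sim x y -> C x /\ C y := proj1 ES.
Let srf : forall x, C x -> sim x x := proj1 (proj2 ES).
Let ssy : forall x y, sim x y -> sim y x := proj1 (proj2 (proj2 ES)).
Let str : forall x y z, sim x y -> sim y z -> sim x z := proj2 (proj2 (proj2 ES)).
Let sclt : forall x y, simeq x y -> Ct x /\ Ct y := proj1 ESt.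
Let srft : forall x, Ct x -> simeq x x := proj1 (proj2 ESt).
Let ssyt : forall x y, simeq x y -> simeq y x := proj1 (proj2 (proj2 ESt)).
Let strt : forall x y z, simeq x y -> simeq y z -> simeq x z :=
  proj2 (proj2 (proj2 ESt)).

Lemma Lctx G1 T T' G2 : sim (rcons G1 T) (rcons G1 T') -> C (rcons G1 T ++ G2) ->
  sim (rcons G1 T ++ G2) (rcons G1 T' ++ G2).
Proof.
elim/last_ind: G2 => [|G0 X IH] h; first by rewrite !cats0.
rewrite -!rcons_cat => hc.
have h1 := IH h (C12 hc).
have hf : sim (ft (rcons (rcons G1 T ++ G0) X)) (rcons G1 T' ++ G0).
  by rewrite /ft ft_rcons.
have := Hii hc (proj2 (scl h1)) hf.
by rewrite sigma_rcons // !size_cat !size_rcons.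
Qed.

Lemma Ltj G T o G' T' : Ct (G, T, o) -> sim (rcons G T) (rcons G' T') ->
  simeq (G, T, o) (G', T', o).
Proof.
move=> hJ h; have e : size G' = size G.
  by case: (Hb h) => e _; move: e; rewrite !size_rcons => -[].
by have := Hiii hJ (proj2 (scl h)) h; rewrite sigmat_rcons.
Qed.

Lemma Lctx2 G1 T T' G2 S : sim (rcons G1 T) (rcons G1 T') ->
  C (rcons (rcons G1 T ++ G2) S) ->
  sim (rcons (rcons G1 T ++ G2) S) (rcons (rcons G1 T' ++ G2) S).
Proof. by move=> h hc; rewrite !rcons_cat; apply: Lctx h _; rewrite -rcons_cat. Qed.

Lemma partB2 : eq_conditions C Ct (psi_Ceq C sim) (psi_Cteq Ct simeq).
Proof.
rewrite /eq_conditions /psi_Ceq /psi_Cteq.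
split.
  move=> G T T' [c1 [c2 _]].
  have [w1 t1] := wf_from_rcons (wfC c1); have [_ t2] := wf_from_rcons (wfC c2).
  by split; [split|]; rewrite // ?t1 ?t2.
split.
  by move=> G T o o' [j1 [j2 _]]; case: (wfCt j1) => w1 t1; case: (wfCt j2) => _ t2.
split; first by move=> G T T' [].
split; first by move=> G T c; split=> //; split=> //; exact: srf.
split; first by move=> G T T' [c1 [c2 h]]; split=> //; split=> //; exact: ssy.
split.
  move=> G T T' T'' [c1 [c2 h]] [_ [c3 h']]; split=> //; split=> //; exact: str h h'.
split; first by move=> G T o o' [].
split; first by move=> G T o c; split=> //; split=> //; exact: srft.
split; first by move=> G T o o' [c1 [c2 h]]; split=> //; split=> //; exact: ssyt.
split.
  move=> G T o o' o'' [c1 [c2 h]] [_ [c3 h']]; split=> //; split=> //; exact: strt h h'.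
split.
  move=> G1 T T' G2 S S' [c1 [c2 h]] [c3 [c4 h']].
  have l1 := Lctx2 h c3; have l2 := Lctx2 h c4.
  split; first exact: (proj2 (scl l1)).
  split; first exact: (proj2 (scl l2)).
  exact: str (ssy l1) (str h' l2).
split.
  move=> G1 T T' G2 S o o' [c1 [c2 h]] [j1 [j2 h']].
  have l1 := Lctx2 h (C13 j1).
  have m1 := Ltj j1 l1; have m2 := Ltj j2 l1.
  split; first exact: (proj2 (sclt m1)).
  split; first exact: (proj2 (sclt m2)).
  exact: strt (ssyt m1) (strt h' m2).
split.
  move=> G S S' o o' [c1 [c2 h]] [j1 [j2 h']].
  have m1 := Ltj j1 h; have m2 := Ltj j2 h.
  split; first exact: (proj2 (sclt m1)).
  split; first exact: (proj2 (sclt m2)).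
  exact: strt (ssyt m1) (strt h' m2).
split.
  move=> G1 T G2 S S' hT [c1 [c2 h]].
  have hh : sim (G1 ++ rcons G2 S) (G1 ++ rcons G2 S') by rewrite -!rcons_cat.
  have := HfT (srf hT) hh.
  rewrite !map_rcons -!rcons_cat => h2.
  by have [k1 k2] := scl h2; split=> //; split.
split.
  move=> G1 T G2 S o o' hT [j1 [j2 h]].
  have h2 := HfTt (srf hT) h.
  by have [k1 k2] := sclt h2; split=> //; split.
split.
  move=> G1 T G2 S S' r [c1 [c2 h]] hr.
  have hh : sim (rcons G1 T ++ rcons G2 S) (rcons G1 T ++ rcons G2 S') by rewrite -!rcons_cat.
  have := HfS (srft hr) hh.
  rewrite !map_rcons -!rcons_cat => h2.
  by have [k1 k2] := scl h2; split=> //; split.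
split.
  move=> G1 T G2 S o o' r [j1 [j2 h]] hr.
  have h2 := HfSt (srft hr) h.
  by have [k1 k2] := sclt h2; split=> //; split.
split.
  move=> G1 T G2 S r r' hc [j1 [j2 h]].
  have hh : C (rcons G1 T ++ rcons G2 S) by rewrite -rcons_cat.
  have := HfS h (srf hh).
  rewrite !map_rcons -!rcons_cat => h2.
  have [_ hft] := Hb h2; rewrite /ft !ft_rcons in hft.
  have ef := proj1 (Hb hft).
  have hf2 : sim (ft (rcons (G1 ++ [seq subT r' i | i <- G2]) (subT r' S)))
                 (G1 ++ [seq subT r i | i <- G2]) by rewrite /ft ft_rcons; exact: ssy.
  have := Hii (proj2 (scl h2)) (proj1 (scl hft)) hf2.
  rewrite sigma_rcons // => h3.
  have [k1 k2] := scl h2; have [k3 k4] := scl h3.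
  by split=> //; split=> //; exact: str h2 h3.
move=> G1 T G2 S o r r' hJ [j1 [j2 h]].
have h2 := HfSt h (srft hJ).
have hb := Hc h2; rewrite /bd /= in hb.
have m := Ltj (proj2 (sclt h2)) (ssy hb).
have [k1 k2] := sclt h2; have [k3 k4] := sclt m.
by split=> //; split=> //; exact: strt h2 m.
Qed.

Let Q := psi_Ceq C sim.
Let nill := @sr_nill M L Q.
Let rconsl := @sr_rconsl M L Q.
Let rc := @sr_rcons M L Q.

Lemma Kst G0 G0' T' : C (rcons G0' T') -> sim G0 G0' ->
  sim (rcons G0' T') (rcons G0 T').
Proof.
move=> c h; have e := proj1 (Hb h).
have hf : sim (ft (rcons G0' T')) G0 by rewrite /ft ft_rcons; exact: ssy.
by have := Hii c (proj1 (scl h)) hf; rewrite sigma_rcons.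
Qed.

Lemma sr_to_sim G G' : sim_rev Q (rev G) (rev G') -> C G -> C G' -> sim G G'.
Proof.
elim/last_ind: G G' => [|G0 T IH] G'.
  by move/nill => -> _ _; exact: srf.
move=> /rconsl [G0' [T' [-> [h1 [c1 [c2 h2]]]]]] cG cG'.
have ih := IH _ h1 (C12 cG) (C12 cG').
exact: str h2 (ssy (Kst cG' ih)).
Qed.

Lemma sim_to_sr G G' : sim G G' -> sim_rev Q (rev G) (rev G').
Proof.
elim/last_ind: G G' => [|G0 T IH] G'.
  case/lastP: G' => [|G0' T'] // h.
  by have := proj1 (Hb h); rewrite size_rcons.
case/lastP: G' => [|G0' T'] h.
  by have := proj1 (Hb h); rewrite size_rcons.
have [_ hf] := Hb h; rewrite /ft !ft_rcons in hf.
have k := Kst (proj2 (scl h)) hf.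
apply/rc; split; first exact: IH.
have [c1 _] := scl h; have [_ c2] := scl k.
by split=> //; split=> //; exact: str h k.
Qed.

Lemma partB4 :
  (forall G G', phi_sim C (psi_Ceq C sim) G G' <-> sim G G') /\
  (forall J J',
     phi_simeq C Ct (psi_Ceq C sim) (psi_Cteq Ct simeq) J J' <-> simeq J J').
Proof.
have P1 : forall G G', phi_sim C (psi_Ceq C sim) G G' <-> sim G G'.
  move=> G G'; split; first by move=> [c1 [c2 h]]; exact: sr_to_sim.
  by move=> h; have [c1 c2] := scl h; split=> //; split=> //; exact: sim_to_sr.
split=> //.
move=> [[G T] o] [[G' T'] o']; split.
  move=> [j1 [j2 [/P1 hb [k1 [k2 hs]]]]]; rewrite /= in hb.
  exact: strt hs (ssyt (Ltj j2 (ssy hb))).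
move=> h; have [j1 j2] := sclt h; have hb := Hc h; rewrite /bd /= in hb.
have m := Ltj j2 (ssy hb).
split=> //; split=> //; split; first exact/P1.
have [_ k] := sclt m.
by split=> //; split=> //; exact: strt h m.
Qed.

End PartB.

Theorem proposition6p11 (M : Monad) (L : LModule M)
  (C : ctx L -> Prop) (Ct : jdg L -> Prop) :
  Csubsystem C Ct ->
  (* the assignment lands in the target set *)
  (forall (Ceq : ctx L -> ety L -> ety L -> Prop)
          (Cteq : ctx L -> ety L -> tm M -> tm M -> Prop),
      eq_conditions C Ct Ceq Cteq ->
      target_conditions C Ct (phi_sim C Ceq) (phi_simeq C Ct Ceq Cteq)) /\
  (* the inverse assignment lands in the source set *)
  (forall (sim : ctx L -> ctx L -> Prop) (simeq : jdg L -> jdg L -> Prop),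
      target_conditions C Ct sim simeq ->
      eq_conditions C Ct (psi_Ceq C sim) (psi_Cteq Ct simeq)) /\
  (* inverse o assignment = id *)
  (forall (Ceq : ctx L -> ety L -> ety L -> Prop)
          (Cteq : ctx L -> ety L -> tm M -> tm M -> Prop),
      eq_conditions C Ct Ceq Cteq ->
      (forall G T T', psi_Ceq C (phi_sim C Ceq) G T T' <-> Ceq G T T') /\
      (forall G T o o',
         psi_Cteq Ct (phi_simeq C Ct Ceq Cteq) G T o o' <-> Cteq G T o o')) /\
  (* assignment o inverse = id *)
  (forall (sim : ctx L -> ctx L -> Prop) (simeq : jdg L -> jdg L -> Prop),
      target_conditions C Ct sim simeq ->
      (forall G G', phi_sim C (psi_Ceq C sim) G G' <-> sim G G') /\
      (forall J J',
         phi_simeq C Ct (psi_Ceq C sim) (psi_Cteq Ct simeq) J J' <-> simeq J J')).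

Proof.
move=> HC; have [wfC [wfCt [c11 [c12 [c13 [c14 [c15 c16]]]]]]] := HC.
split.
  move=> Ceq Cteq HE; have [e0 [e1 [e2 [e3 [e4 [e5 [e6 [e7 [e8 [e9 [e10 [e11 [e12 [e13 [e14 [e15 [e16 [e17 e18]]]]]]]]]]]]]]]]]] := HE.
  by apply: partA1; assumption.
split.
  move=> sim simeq [s1 [s2 [[_ [hb [hc [hd [he [f1 [f2 [f3 [f4 f5]]]]]]]]] [hii hiii]]]].
  by apply: partB2; assumption.
split.
  move=> Ceq Cteq HE; have [e0 [e1 [e2 [e3 [e4 [e5 [e6 [e7 [e8 [e9 [e10 [e11 [e12 [e13 [e14 [e15 [e16 [e17 e18]]]]]]]]]]]]]]]]]] := HE.
  by apply: partA3; assumption.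
move=> sim simeq [s1 [s2 [[_ [hb [hc [hd [he [f1 [f2 [f3 [f4 f5]]]]]]]]] [hii hiii]]]].
by apply: partB4; assumption.
Qed.
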